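(* Let $K$ be a field of any characteristic. Let $d_1,\ldots,d_n$ be positive integers and let $a_{i,j}$ ($1\le i\le 2$, $1\le j\le n$) be nonnegative integers such that for each $i\in\{1,2\}$ at least one of $a_{i,1},\ldots,a_{i,n}$ is nonzero. Let $A$ be the set of columns of the $n\times(n+2)$ matrix $$\begin{pmatrix} d_1 & 0 & \cdots & 0 & a_{1,1} & a_{2,1}\\ 0 & d_2 & \cdots & 0 & a_{1,2} & a_{2,2}\\ \vdots & & \ddots & & \vdots & \vdots\\ 0 & 0 & \cdots & d_n & a_{1,n} & a_{2,n}\end{pmatrix},$$ so that $V(I_A)$ is a simplicial toric variety and $I_A\subset K[x_1,\ldots,x_{n+2}]$ has height $2$. Then $2\le\mathrm{Split}_{\mathrm{rad}}(I_A)\le 3$.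
   Context: For a configuration $A=\{{\bf a}_1,\ldots,{\bf a}_N\}\subset\mathbb{Z}^n$ with $\ker_{\mathbb{Z}}(A)\cap\mathbb{N}^N=\{{\bf 0}\}$, the toric ideal $I_A$ is the kernel of $K[x_1,\ldots,x_N]\to K[t_1^{\pm1},\ldots,t_n^{\pm1}]$, $x_i\mapsto{\bf t}^{{\bf a}_i}$. $\mathrm{Split}_{\mathrm{rad}}(I_A)$ is the smallest integer $r$ such that there exist toric ideals $I_{A_1},\ldots,I_{A_r}\subset K[x_1,\ldots,x_N]$ with $I_A=\mathrm{rad}(I_{A_1}+\cdots+I_{A_r})$ and $I_{A_i}\ne I_A$ for all $i$. *)

(* Defs.v *)
From HB Require Import structures.
From mathcomp Require Import all_boot all_order all_algebra.
From mathcomp Require Import mpoly.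
Set Implicit Arguments. Unset Strict Implicit. Unset Printing Implicit Defensive.
Import Order.TTheory GRing.Theory Num.Theory.
Local Open Scope ring_scope.

(* A configuration of N vectors in Z^n: column j is (A j : 'I_n -> int). *)
Definition config (N n : nat) := 'I_N -> 'I_n -> int.

Definition pointed_config (N n : nat) (A : config N n) : Prop :=
  forall u : 'I_N -> nat,
    (forall k : 'I_n, \sum_(j < N) (u j)%:Z * A j k = 0) -> forall j, u j = 0%N.

(* exponent of t of the image of x^m under x_j |-> t^{a_j} : the vector A m *)
Definition Aimg (N n : nat) (A : config N n) (m : 'X_{1..N}) : {ffun 'I_n -> int} :=
  [ffun k => \sum_(j < N) ((m j)%:Z * A j k)%R].

(* Toric ideal I_A = kernel of K[x_1..x_N] -> K[t^{±1}] = K[Z^n], x_j |-> t^{a_j}.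
   The image of f is sum_m f@_m t^{A m}; it vanishes iff for each b in Z^n
   the coefficients of the monomials m with A m = b sum to 0. *)
Definition toric_ideal (K : fieldType) (N n : nat) (A : config N n)
  (f : {mpoly K[N]}) : Prop :=
  forall b : {ffun 'I_n -> int},
    \sum_(m <- msupp f | Aimg A m == b) f@_m = 0.

Definition ideal_sum (K : fieldType) (N r : nat) (I : 'I_r -> {mpoly K[N]} -> Prop)
  (f : {mpoly K[N]}) : Prop :=
  exists g : 'I_r -> {mpoly K[N]}, (forall i, I i (g i)) /\ f = \sum_(i < r) g i.

Definition radical (K : fieldType) (N : nat) (J : {mpoly K[N]} -> Prop)
  (f : {mpoly K[N]}) : Prop := exists k : nat, J (f ^+ k).

Definition rad_split_with (K : fieldType) (N n : nat) (A : config N n) (r : nat) : Prop :=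
  exists (ns : 'I_r -> nat) (As : forall i : 'I_r, config N (ns i)),
    (forall i, pointed_config (As i)) /\
    (forall f : {mpoly K[N]},
        toric_ideal A f <-> radical (ideal_sum (fun i => @toric_ideal K N (ns i) (As i))) f) /\
    (forall i, ~ (forall f : {mpoly K[N]}, toric_ideal (As i) f <-> toric_ideal A f)).

(* The configuration of the columns of
   [ diag(d_1..d_n) | a_1 | a_2 ], with a_i = (a i 0, ..., a i (n-1)). *)
Definition corconfig (n : nat) (d : 'I_n -> nat) (a : 'I_2 -> 'I_n -> nat)
  : config (n + 2) n :=
  fun j k => match split j with
             | inl j' => if j' == k then (d k)%:Z else 0
             | inr i => (a i k)%:Z
             end.

(* Main.v *)
Require Import Defs.
From HB Require Import structures.
From mathcomp Require Import all_boot all_order all_algebra.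
From mathcomp Require Import mpoly.
From mathcomp Require Import ssrcomplements bigenough.
From mathcomp Require Import zify ring lra.
Import BigEnough.
Set Implicit Arguments. Unset Strict Implicit. Unset Printing Implicit Defensive.
Import Order.TTheory GRing.Theory Num.Theory.
Local Open Scope ring_scope.
Section Fib.
Variables (K : fieldType) (N n : nat) (A : config N n).

Definition fib (b : {ffun 'I_n -> int}) (f : {mpoly K[N]}) : K :=
  \sum_(m <- msupp f) f@_m * (Aimg A m == b)%:R.

Lemma fib_filter b f : fib b f = \sum_(m <- msupp f | Aimg A m == b) f@_m.
Proof.
rewrite /fib [RHS]big_mkcond /=; apply: eq_bigr=> m _.
by case: eqP; rewrite ?mulr1 ?mulr0.
Qed.

Lemma toricE f : toric_ideal A f <-> forall b, fib b f = 0.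
Proof. by split=> H b; [rewrite fib_filter | rewrite -fib_filter]. Qed.

Lemma fibE b f i : (msize f <= i)%N ->
  fib b f = \sum_(m : 'X_{1..N < i}) f@_m * (Aimg A m == b)%:R.
Proof.
move=> le_pi; set I : subFinType _ := 'X_{1..N < i}.
rewrite /fib (big_mksub I) ?msupp_uniq //=; first last.
  by move=> x /msize_mdeg_lt /leq_trans; apply.
rewrite big_rmcond //= => j /memN_msupp_eq0 ->.
by rewrite mul0r.
Qed.

Lemma fibD b f g : fib b (f + g) = fib b f + fib b g.
Proof.
pose_big_enough i.
  rewrite !(@fibE b _ i) // -big_split; apply/eq_bigr=> m _.
  by rewrite mcoeffD mulrDl.
by close.
Qed.

Lemma fibZ b c f : fib b (c *: f) = c * fib b f.
Proof.
pose_big_enough i.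
  rewrite !(@fibE b _ i) // mulr_sumr; apply/eq_bigr=> m _.
  by rewrite mcoeffZ mulrA.
by close.
Qed.

Lemma fib0 b : fib b 0 = 0.
Proof. by rewrite /fib msupp0 big_nil. Qed.

Lemma fibN b f : fib b (- f) = - fib b f.
Proof. by rewrite -scaleN1r fibZ mulN1r. Qed.

Lemma fib_sum b I (r : seq I) (F : I -> {mpoly K[N]}) :
  fib b (\sum_(i <- r) F i) = \sum_(i <- r) fib b (F i).
Proof. by apply: (big_morph _ (@fibD b) (fib0 b)). Qed.

Lemma fibX b m : fib b 'X_[m] = (Aimg A m == b)%:R.
Proof. by rewrite /fib msuppX big_seq1 mcoeffX eqxx mul1r. Qed.

Lemma AimgD m1 m2 : Aimg A (m1 + m2)%MM = Aimg A m1 + Aimg A m2.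
Proof.
apply/ffunP=> k; rewrite !ffunE -big_split; apply: eq_bigr=> j _.
by rewrite mnmDE PoszD mulrDl.
Qed.

Lemma Aimg0 : Aimg A 0%MM = 0.
Proof. by apply/ffunP=> k; rewrite !ffunE big1 // => j _; rewrite mnm0E mul0r. Qed.

Lemma AimgMn m k : Aimg A (m *+ k)%MM = Aimg A m *+ k.
Proof.
elim: k => [|k IH]; first by rewrite mulm0n Aimg0.
by rewrite mulmS AimgD IH mulrS.
Qed.

Lemma fibXM b m f : fib b ('X_[m] * f) = fib (b - Aimg A m) f.
Proof.
rewrite {1}[f]mpolyE mulr_sumr fib_sum [RHS]/fib; apply: eq_bigr=> m' _.
rewrite -scalerAr -mpolyXD fibZ fibX AimgD.
congr (_ * _%:R); congr (nat_of_bool _); apply/idP/idP => /eqP H; apply/eqP.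
  by rewrite -H addrC addKr.
by rewrite H addrC subrK.
Qed.

Local Notation tor := (@toric_ideal K N n A).

Lemma toric0 : tor 0.
Proof. by apply/toricE=> b; rewrite fib0. Qed.

Lemma toricD f g : tor f -> tor g -> tor (f + g).
Proof. by move=> /toricE Hf /toricE Hg; apply/toricE=> b; rewrite fibD Hf Hg addr0. Qed.

Lemma toricZ c f : tor f -> tor (c *: f).
Proof. by move=> /toricE Hf; apply/toricE=> b; rewrite fibZ Hf mulr0. Qed.

Lemma toricM h f : tor f -> tor (h * f).
Proof.
move=> /toricE Hf; apply/toricE=> b.
rewrite {1}[h]mpolyE mulr_suml fib_sum big1 // => m _.
by rewrite -scalerAl fibZ fibXM Hf mulr0.
Qed.

Lemma toric_sum I (r : seq I) (F : I -> {mpoly K[N]}) :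
  (forall i, tor (F i)) -> tor (\sum_(i <- r) F i).
Proof. by move=> H; apply: (big_ind _ toric0 toricD). Qed.

Lemma toric_binom m m' : Aimg A m = Aimg A m' -> tor ('X_[m] - 'X_[m']).
Proof. by move=> E; apply/toricE=> b; rewrite fibD fibN !fibX E subrr. Qed.

Lemma toric_decomp f : tor f ->
  exists rep : 'X_{1..N} -> 'X_{1..N},
    (forall m, Aimg A (rep m) = Aimg A m) /\
    f = \sum_(m <- msupp f) f@_m *: ('X_[m] - 'X_[rep m]).
Proof.
move=> /toricE Hf; set s := msupp f.
pose F b := nth 0%MM s (find (fun m' => Aimg A m' == b) s).
pose rep m := if m \in s then F (Aimg A m) else m.
have repA m : Aimg A (rep m) = Aimg A m.
  rewrite /rep; case: ifP => // ms; apply/eqP.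
  by apply: (@nth_find _ 0%MM (fun m' => Aimg A m' == Aimg A m)); apply/hasP; exists m.
exists rep; split=> //.
rewrite (eq_bigr (fun m => f@_m *: 'X_[m] - f@_m *: 'X_[rep m])); last first.
  by move=> m _; rewrite scalerBr.
rewrite sumrB /s -mpolyE.
suff -> : \sum_(m <- msupp f) f@_m *: 'X_[rep m] = 0 by rewrite subr0.
apply/mpolyP=> m''; rewrite mcoeff0 raddf_sum /=.
have [/hasP [m0 m0s /eqP rm0]|hn] := boolP (has (fun m => rep m == m'') (msupp f)); last first.
  rewrite big_seq big1 // => m ms; rewrite mcoeffZ mcoeffX.
  by move/hasPn: hn => /(_ m ms) /negbTE ->; rewrite mulr0.
rewrite -[RHS](Hf (Aimg A m'')) /fib big_seq [RHS]big_seq; apply: eq_bigr=> m ms.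
rewrite mcoeffZ mcoeffX; congr (_ * _%:R); congr (nat_of_bool _).
apply/idP/idP => /eqP H; apply/eqP.
  by rewrite -H repA.
have Fm0 : F (Aimg A m0) = m'' by move: rm0; rewrite /rep m0s.
have Am'' : Aimg A m'' = Aimg A m0 by rewrite -rm0 repA.
by rewrite /rep ms H Am'' Fm0.
Qed.

Lemma fibMn b f c : fib b (f *+ c) = fib b f *+ c.
Proof. by elim: c => [|c IH]; rewrite ?mulr0n ?fib0 // !mulrS fibD IH. Qed.

Lemma fibNpow b i f : fib b ((-1)^+i * f) = (-1)^+i * fib b f.
Proof.
elim: i => [|i IH]; first by rewrite !expr0 !mul1r.
by rewrite !exprS !mulNr !mul1r fibN IH.
Qed.

Lemma binom_pow_fib m m' k : Aimg A m != Aimg A m' ->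
  fib (Aimg A m *+ k) (('X_[m] - 'X_[m'])^+k) = 1.
Proof.
move=> neq; rewrite exprDn fib_sum big_ord_recl /= big1 ?addr0.
  by rewrite subn0 expr0 mulr1 bin0 mulr1n mpolyXn fibX AimgMn eqxx.
move=> i _; rewrite exprNn mulrCA mpolyXn mpolyXn -mpolyXD fibMn fibNpow fibX.
case: eqP; last by rewrite mulr0 mul0rn.
rewrite AimgD !AimgMn => /eqP E; exfalso; move: neq E.
rewrite /bump leq0n add1n.
have lt : (i.+1 <= k)%N by apply: ltn_ord.
have -> : Aimg A m *+ k = Aimg A m *+ (k - i.+1) + Aimg A m *+ i.+1.
  by rewrite -mulrnDr subnK.
move=> /negP neq /eqP /addrI E; apply: neq.
apply/eqP; apply/ffunP => j.
have := congr1 (fun f : {ffun 'I_n -> int} => f j) E; rewrite /= !ffunMnE => /eqP.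
by rewrite (eqr_pMn2r (ltn0Sn i)) => /eqP ->.
Qed.

Lemma binom_not_tor m m' k : Aimg A m != Aimg A m' ->
  ~ @toric_ideal K N n A (('X_[m] - 'X_[m'])^+k).
Proof.
by move=> neq /toricE /(_ (Aimg A m *+ k)); rewrite binom_pow_fib // => /eqP; rewrite oner_eq0.
Qed.
End Fib.

Section Ideals.
Variables (K : fieldType) (N : nat).
Implicit Types (J : {mpoly K[N]} -> Prop).

Definition ideal_pred J := [/\ J 0, (forall x y, J x -> J y -> J (x + y)) &
   (forall h x, J x -> J (h * x))].

Lemma tor_ideal n (A : config N n) : ideal_pred (@toric_ideal K N n A).
Proof. by split; [apply: toric0 | apply: toricD | apply: toricM]. Qed.

Lemma idealN J x : ideal_pred J -> J x -> J (- x).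
Proof. by case=> _ _ HM Jx; rewrite -mulN1r; apply: HM. Qed.

Lemma idealB J x y : ideal_pred J -> J x -> J y -> J (x - y).
Proof. by move=> I Jx Jy; case: (I) => _ HD _; apply: HD => //; apply: idealN. Qed.

Lemma idealMr J x h : ideal_pred J -> J x -> J (x * h).
Proof. by case=> _ _ HM Jx; rewrite mulrC; apply: HM. Qed.

Lemma ideal_sumP J (I : eqType) (r : seq I) (F : I -> {mpoly K[N]}) : ideal_pred J ->
  (forall i, i \in r -> J (F i)) -> J (\sum_(i <- r) F i).
Proof.
case=> H0 HD _ H; rewrite big_seq; apply: big_ind => //.
Qed.

Lemma ideal_sum_ideal r (I : 'I_r -> {mpoly K[N]} -> Prop) :
  (forall i, ideal_pred (I i)) -> ideal_pred (ideal_sum I).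
Proof.
move=> HI; split.
- exists (fun _ => 0); split; last by rewrite big1.
  by move=> i; case: (HI i).
- move=> x y [gx [Hx ->]] [gy [Hy ->]]; exists (fun i => gx i + gy i); split.
    by move=> i; case: (HI i) => _ HD _; apply: HD.
  by rewrite big_split.
- move=> h x [gx [Hx ->]]; exists (fun i => h * gx i); split.
    by move=> i; case: (HI i) => _ _ HM; apply: HM.
  by rewrite mulr_sumr.
Qed.

Lemma ideal_sum_in r (I : 'I_r -> {mpoly K[N]} -> Prop) i f :
  (forall i, ideal_pred (I i)) -> I i f -> ideal_sum I f.
Proof.
move=> HI Hf; exists (fun j => if j == i then f else 0); split.
  by move=> j; case: eqP => [->|_] //; case: (HI j).
by rewrite (bigD1 i) //= eqxx big1 ?addr0 // => j /negbTE ->.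
Qed.

Lemma radD J x y i j : ideal_pred J -> J (x ^+ i) -> J (y ^+ j) ->
  J ((x + y) ^+ (i + j)).
Proof.
move=> I Hx Hy; rewrite exprDn; apply: ideal_sumP => // l _.
have [HJ0 HD HM] := I.
rewrite -mulr_natr; apply: idealMr => //.
case: (leqP j l) => hl.
  have -> : y ^+ l = y ^+ (l - j) * y ^+ j by rewrite -exprD subnK.
  by rewrite mulrA; apply: HM.
have hl' : (i <= i + j - l)%N by lia.
have -> : x ^+ (i + j - l) = x ^+ (i + j - l - i) * x ^+ i by rewrite -exprD subnK.
by rewrite mulrAC; apply: HM.
Qed.

Lemma radZ J x c i : ideal_pred J -> J (x ^+ i) -> J ((c *: x) ^+ i).
Proof.
case=> _ _ HM Hx; rewrite -mul_mpolyC exprMn; exact: HM.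
Qed.

Lemma rad_sum J (I : eqType) (r : seq I) (F : I -> {mpoly K[N]}) : ideal_pred J ->
  (forall i, i \in r -> exists k, J (F i ^+ k)) ->
  exists k, J ((\sum_(i <- r) F i) ^+ k).
Proof.
move=> HI; elim: r => [|a r IH] H.
  by exists 1%N; rewrite big_nil expr1; case: HI.
have [ka Ha] := H a (mem_head a r).
have [kr Hr] : exists k, J ((\sum_(i <- r) F i) ^+ k).
  by apply: IH => i ir; apply: H; rewrite in_cons ir orbT.
by exists (ka + kr)%N; rewrite big_cons; apply: radD.
Qed.

Lemma rad_binom J x y N0 : ideal_pred J -> J (x ^+ N0 * (x - y)) ->
  J (y ^+ N0 * (x - y)) -> J ((x - y) ^+ (N0 + N0).+1).
Proof.
move=> I Hx Hy.
have [HJ0 HD HM] := I.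
suff P : forall k, forall i j, (N0 + N0 < i + j + k.+1)%N ->
    J (x ^+ i * y ^+ j * (x - y) ^+ k.+1).
  by have := P (N0 + N0) 0%N 0%N; rewrite !expr0 !mul1r; apply; lia.
elim=> [|k IH] i j hij.
  rewrite expr1; case: (leqP N0 i) => hi.
    have -> : x ^+ i * y ^+ j * (x - y) = (x ^+ (i - N0) * y ^+ j) * (x ^+ N0 * (x - y)).
      by rewrite -{1}(subnK hi) exprD; ring.
    by apply: HM.
  have hj : (N0 <= j)%N by lia.
  have -> : x ^+ i * y ^+ j * (x - y) = (x ^+ i * y ^+ (j - N0)) * (y ^+ N0 * (x - y)).
    by rewrite -{1}(subnK hj) exprD; ring.
  by apply: HM.
have -> : x ^+ i * y ^+ j * (x - y) ^+ k.+2 =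
   x ^+ i.+1 * y ^+ j * (x - y) ^+ k.+1 - x ^+ i * y ^+ j.+1 * (x - y) ^+ k.+1.
  by rewrite !exprS; ring.
by apply: idealB => //; apply: IH; lia.
Qed.

End Ideals.


Section Rel.
Variables (K : fieldType) (N : nat) (J : {mpoly K[N]} -> Prop).
Hypothesis HJ : ideal_pred J.

Definition mrel (m m' : 'X_{1..N}) := J ('X_[m] - 'X_[m']).

Lemma mrel_refl m : mrel m m.
Proof. by rewrite /mrel subrr; case: HJ. Qed.

Lemma mrel_sym m m' : mrel m m' -> mrel m' m.
Proof. by rewrite /mrel => H; rewrite -opprB; apply: idealN. Qed.

Lemma mrel_trans m2 m1 m3 : mrel m1 m2 -> mrel m2 m3 -> mrel m1 m3.
Proof.
rewrite /mrel => H1 H2; have -> : 'X_[m1] - 'X_[m3] = ('X_[m1] - 'X_[m2]) + ('X_[m2] - 'X_[m3]) :> {mpoly K[N]}.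
  by rewrite addrA subrK.
by case: HJ => _ HD _; apply: HD.
Qed.

Lemma mrel_shift c m m' : mrel m m' -> mrel (c + m)%MM (c + m')%MM.
Proof. by rewrite /mrel !mpolyXD -mulrBr => H; case: HJ => _ _ HM; apply: HM. Qed.

Lemma mrel_add m m' e e' : mrel m m' -> mrel e e' -> mrel (m + e)%MM (m' + e')%MM.
Proof.
move=> H1 H2; apply: (@mrel_trans (m' + e)%MM).
  by rewrite ![(_ + e)%MM]addmC; apply: mrel_shift.
by apply: mrel_shift.
Qed.

Lemma mrel_muln m m' k : mrel m m' -> mrel (m *+ k)%MM (m' *+ k)%MM.
Proof.
move=> H; elim: k => [|k IH]; first by rewrite !mulm0n; apply: mrel_refl.
by rewrite !mulmS; apply: mrel_add.
Qed.

Lemma mrel_pow m1 m2 : (exists N0, mrel (m1 *+ N0.+1)%MM (m1 *+ N0 + m2)%MM) ->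
   (exists N0, mrel (m2 *+ N0.+1)%MM (m2 *+ N0 + m1)%MM) ->
   exists k, J (('X_[m1] - 'X_[m2]) ^+ k).
Proof.
have key : forall m m' N0, mrel (m *+ N0.+1)%MM (m *+ N0 + m')%MM ->
    forall N1, (N0 <= N1)%N -> J ('X_[m] ^+ N1 * ('X_[m] - 'X_[m'])).
  move=> m m' N0 H N1 le; rewrite -(subnK le) exprD -mulrA; case: HJ => _ _ HM; apply: HM.
  by move: H; rewrite /mrel mulmSr !mpolyXD -mpolyXn mulrBr.
move=> [N1 H1] [N2 H2]; exists (maxn N1 N2 + maxn N1 N2).+1.
apply: rad_binom => //.
  by apply: (key _ _ N1) => //; apply: leq_maxl.
rewrite -opprB mulrN; apply: idealN => //.
by apply: (key _ _ N2) => //; apply: leq_maxr.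
Qed.

End Rel.

Section Cor.
Variables (n : nat) (d : 'I_n -> nat) (a : 'I_2 -> 'I_n -> nat).
Hypothesis hd : forall j, (0 < d j)%N.
Hypothesis ha : forall i, exists j, a i j != 0%N.

Definition xi (k : 'I_n) : 'I_(n + 2) := lshift 2 k.
Definition yi : 'I_(n + 2) := rshift n ord0.
Definition zi : 'I_(n + 2) := rshift n ord_max.
Definition a1 := a ord0.
Definition a2 := a ord_max.
Local Notation A := (corconfig d a).
Implicit Types (m : 'X_{1..n+2}).

Lemma ordP j : (exists k, j = xi k) \/ j = yi \/ j = zi.
Proof.
case: (split_ordP j) => [k ->|i ->].
  by left; exists k.
right; case: i => [[|[|i]] Hi].
- by left; apply: val_inj.
- by right; apply: val_inj.
- by [].
Qed.

Lemma yx k : (yi == xi k) = false. Proof. exact: eq_rlshift. Qed.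
Lemma zx k : (zi == xi k) = false. Proof. exact: eq_rlshift. Qed.
Lemma xy k : (xi k == yi) = false. Proof. exact: eq_lrshift. Qed.
Lemma xz k : (xi k == zi) = false. Proof. exact: eq_lrshift. Qed.
Lemma yz : (yi == zi) = false. Proof. by rewrite /yi /zi eq_rshift. Qed.
Lemma zy : (zi == yi) = false. Proof. by rewrite /yi /zi eq_rshift. Qed.

Definition degA (m : 'X_{1..n+2}) (k : 'I_n) : nat :=
  (d k * m (xi k) + a1 k * m yi + a2 k * m zi)%N.

Lemma AimgE m : Aimg A m = [ffun k => (degA m k)%:Z].
Proof.
apply/ffunP=> k; rewrite !ffunE big_split_ord /=.
have sl j : split (@lshift n 2 j) = inl j by exact: (unsplitK (inl j)).
have sr j : split (@rshift n 2 j) = inr j by exact: (unsplitK (inr j)).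
rewrite (eq_bigr (fun j => (m (xi j))%:Z * (if j == k then (d k)%:Z else 0))); last first.
  by move=> j _; rewrite /corconfig sl; case: eqP => [->|].
rewrite (bigD1 k) //= eqxx big1 ?addr0; last by move=> j /negbTE ->; rewrite mulr0.
rewrite (eq_bigr (fun j => (m (rshift n j))%:Z * (a j k)%:Z)); last first.
  by move=> j _; rewrite /corconfig sr.
rewrite big_ord_recl big_ord1 /degA /yi /zi.
have -> : lift ord0 (@ord0 0) = @ord_max 1 by apply: val_inj.
rewrite /a1 /a2; lia.
Qed.

Lemma AimgP m m' : Aimg A m = Aimg A m' <-> forall k, degA m k = degA m' k.
Proof.
rewrite !AimgE; split=> [H k|H].
  by move/ffunP: H => /(_ k); rewrite !ffunE => -[].
by apply/ffunP=> k; rewrite !ffunE H.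
Qed.

Lemma degAD m m' k : degA (m + m')%MM k = (degA m k + degA m' k)%N.
Proof. rewrite /degA !mnmDE; lia. Qed.

Lemma degAMn m t k : degA (m *+ t)%MM k = (degA m k * t)%N.
Proof. rewrite /degA !mulmnE; lia. Qed.

Lemma mnm_eq m m' : m yi = m' yi -> m zi = m' zi ->
  (forall k, degA m k = degA m' k) -> m = m'.
Proof.
move=> Hy Hz Hd; apply/mnmP=> j; case: (ordP j) => [[k ->]|[->|->]] //.
have := Hd k; rewrite /degA Hy Hz => /addIn /addIn /eqP.
by rewrite eqn_pmul2l // => /eqP.
Qed.


Definition PL (p q : nat) := [forall k, (d k %| p * a1 k + q * a2 k)%N].

Definition Dprod := (\prod_(k < n) d k)%N.
Lemma Dprod_gt0 : (0 < Dprod)%N.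
Proof. by rewrite /Dprod prodn_gt0. Qed.
Lemma dvd_Dprod k : (d k %| Dprod)%N.
Proof. by rewrite /Dprod (bigD1 k) //= dvdn_mulr. Qed.

Lemma ex_p1 : exists p, (0 < p)%N && PL p 0.
Proof.
exists Dprod; rewrite Dprod_gt0 /=; apply/forallP=> k.
by rewrite mul0n addn0 dvdn_mulr // dvd_Dprod.
Qed.
Definition p1 := ex_minn ex_p1.
Lemma p1_spec : [/\ (0 < p1)%N, PL p1 0 & forall p, (0 < p)%N -> PL p 0 -> (p1 <= p)%N].
Proof.
rewrite /p1; case: ex_minnP => p /andP [H1 H2] H3; split=> // q q0 Hq.
by apply: H3; rewrite q0.
Qed.

Lemma ex_q2 : exists q, (0 < q)%N && PL 0 q.
Proof.
exists Dprod; rewrite Dprod_gt0 /=; apply/forallP=> k.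
by rewrite mul0n add0n dvdn_mulr // dvd_Dprod.
Qed.
Definition q2 := ex_minn ex_q2.
Lemma q2_spec : [/\ (0 < q2)%N, PL 0 q2 & forall q, (0 < q)%N -> PL 0 q -> (q2 <= q)%N].
Proof.
rewrite /q2; case: ex_minnP => p /andP [H1 H2] H3; split=> // q q0 Hq.
by apply: H3; rewrite q0.
Qed.

Lemma p1_gt0 : (0 < p1)%N. Proof. by case: p1_spec. Qed.
Lemma q2_gt0 : (0 < q2)%N. Proof. by case: q2_spec. Qed.

Lemma ex_g : exists q, (0 < q)%N && [exists p : 'I_p1, PL p q].
Proof.
exists q2; rewrite q2_gt0 /=; apply/existsP; exists (Ordinal p1_gt0).
by case: q2_spec.
Qed.
Definition g := ex_minn ex_g.
Definition p3 := if [pick p : 'I_p1 | PL p g] is Some p then val p else 0%N.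

Lemma g_spec : [/\ (0 < g)%N, (p3 < p1)%N, PL p3 g &
   forall q p, (0 < q)%N -> (p < p1)%N -> PL p q -> (g <= q)%N].
Proof.
have [H1 H2 H3] : [/\ (0 < g)%N, [exists p : 'I_p1, PL p g] &
    forall q, (0 < q)%N -> [exists p : 'I_p1, PL p q] -> (g <= q)%N].
  rewrite /g; case: ex_minnP => q /andP [H1 H2] H3; split=> // q' q0 Hq.
  by apply: H3; rewrite q0.
split=> //.
- by rewrite /p3; case: pickP => [p _|]; [apply: ltn_ord | move=> _; apply: p1_gt0].
- rewrite /p3; case: pickP => [p //|H]; move/existsP: H2 => [p Hp].
  by rewrite H in Hp.
- move=> q p q0 lp Hp; apply: H3 => //; apply/existsP; exists (Ordinal lp); exact: Hp.
Qed.

Lemma g_gt0 : (0 < g)%N. Proof. by case: g_spec. Qed.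

Definition inL (P Q : int) := forall k, ((d k)%:Z %| P * (a1 k)%:Z + Q * (a2 k)%:Z)%Z.

Lemma inL_nat p q : PL p q -> inL p%:Z q%:Z.
Proof.
move=> /forallP H k; have := H k.
by rewrite -!PoszM -PoszD dvdzE.
Qed.

Lemma inL_lin P Q P' Q' c : inL P Q -> inL P' Q' -> inL (P + c * P') (Q + c * Q').
Proof.
move=> H H' k.
have -> : (P + c * P') * (a1 k)%:Z + (Q + c * Q') * (a2 k)%:Z =
   (P * (a1 k)%:Z + Q * (a2 k)%:Z) + c * (P' * (a1 k)%:Z + Q' * (a2 k)%:Z) by ring.
have /dvdzP [u1 ->] := H k; have /dvdzP [u2 ->] := H' k.
by apply/dvdzP; exists (u1 + c * u2); ring.
Qed.

Lemma int_nat (R : int) : 0 <= R -> exists r : nat, R = r%:Z.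
Proof. by move=> H; exists `|R|%N; rewrite gez0_abs. Qed.

Lemma inL_p1 P : inL P 0 -> exists r, P = r * p1%:Z.
Proof.
move=> H; have [p1g PL1 min1] := p1_spec.
have nz : p1%:Z != 0 by rewrite eqz_nat -lt0n.
have HR : inL (P %% p1%:Z)%Z 0.
  have -> : (P %% p1%:Z)%Z = P + (- (P %/ p1%:Z)%Z) * p1%:Z.
    by rewrite {2}(divz_eq P p1%:Z); ring.
  have := inL_lin (- (P %/ p1%:Z)%Z) H (inL_nat PL1).
  by rewrite mulr0 addr0.
have [r Er] := int_nat (modz_ge0 P nz).
have rlt : (r < p1)%N by rewrite -ltz_nat -Er -[X in _ < X]gez0_abs ?ltz_mod.
case: (posnP r) => [r0|rp].
  by exists (P %/ p1%:Z)%Z; rewrite {1}(divz_eq P p1%:Z) Er r0 addr0.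
exfalso; have : (p1 <= r)%N.
  apply: min1 => //; apply/forallP=> k; move: (HR k); rewrite Er -!PoszM -PoszD dvdzE.
  by [].
by rewrite leqNgt rlt.
Qed.

Lemma inL_q2 Q : inL 0 Q -> exists r, Q = r * q2%:Z.
Proof.
move=> H; have [q2g PL2 min2] := q2_spec.
have nz : q2%:Z != 0 by rewrite eqz_nat -lt0n.
have HR : inL 0 (Q %% q2%:Z)%Z.
  have -> : (Q %% q2%:Z)%Z = Q + (- (Q %/ q2%:Z)%Z) * q2%:Z.
    by rewrite {2}(divz_eq Q q2%:Z); ring.
  have := inL_lin (- (Q %/ q2%:Z)%Z) H (inL_nat PL2).
  by rewrite mulr0 addr0.
have [r Er] := int_nat (modz_ge0 Q nz).
have rlt : (r < q2)%N by rewrite -ltz_nat -Er -[X in _ < X]gez0_abs ?ltz_mod.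
case: (posnP r) => [r0|rp].
  by exists (Q %/ q2%:Z)%Z; rewrite {1}(divz_eq Q q2%:Z) Er r0 addr0.
exfalso; have : (q2 <= r)%N.
  apply: min2 => //; apply/forallP=> k; move: (HR k); rewrite Er -!PoszM -PoszD dvdzE.
  by [].
by rewrite leqNgt rlt.
Qed.

Lemma inL_g P Q : inL P Q -> exists s, Q = s * g%:Z.
Proof.
move=> H; have [gg p3lt PL3 ming] := g_spec.
have [p1g PL1 _] := p1_spec.
have nz : g%:Z != 0 by rewrite eqz_nat -lt0n.
have nz1 : p1%:Z != 0 by rewrite eqz_nat -lt0n.
set Q1 := (Q %/ g%:Z)%Z; set Q0 := (Q %% g%:Z)%Z.
set P' := P + (- Q1) * p3%:Z.
have H1 : inL P' Q0.
  have := inL_lin (- Q1) H (inL_nat PL3).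
  have -> // : Q + - Q1 * g%:Z = Q0.
  by rewrite {1}(divz_eq Q g%:Z) -/Q1 -/Q0; ring.
set P0 := (P' %% p1%:Z)%Z.
have H2 : inL P0 Q0.
  have := inL_lin (- (P' %/ p1%:Z)%Z) H1 (inL_nat PL1).
  rewrite mulr0 addr0 (_ : P' + - (P' %/ p1%:Z)%Z * p1%:Z = P0) //.
  by rewrite /P0 {1}(divz_eq P' p1%:Z); ring.
have [r Er] := int_nat (modz_ge0 P' nz1).
have rlt : (r < p1)%N by rewrite -ltz_nat -Er -[X in _ < X]gez0_abs ?ltz_mod.
have [s Es] := int_nat (modz_ge0 Q nz).
have slt : (s < g)%N by rewrite -ltz_nat -Es -[X in _ < X]gez0_abs ?ltz_mod.
case: (posnP s) => [s0|sp].
  by exists Q1; rewrite {1}(divz_eq Q g%:Z) -/Q1 Es s0 addr0.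
exfalso; have : (g <= s)%N.
  apply: (ming _ r) => //; apply/forallP=> k; move: (H2 k).
  by rewrite /P0 /Q0 Er Es -!PoszM -PoszD dvdzE.
by rewrite leqNgt slt.
Qed.

Lemma deg_inL m m' : (forall k, degA m k = degA m' k) ->
  inL ((m yi)%:Z - (m' yi)%:Z) ((m zi)%:Z - (m' zi)%:Z).
Proof.
move=> H k; apply/dvdzP; exists ((m' (xi k))%:Z - (m (xi k))%:Z).
have := congr1 Posz (H k); rewrite /degA !PoszD !PoszM => E.
lia.
Qed.

Lemma intsplit (r : int) : exists a a' : nat, r = a%:Z - a'%:Z /\ (a = 0 \/ a' = 0)%N.
Proof.
case: r => [k|k]; first by exists k, 0%N; split; [rewrite subr0 | right].
by exists 0%N, k.+1; split; [rewrite NegzE sub0r | left].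
Qed.

Lemma Gprime m1 m2 : (forall k, degA m1 k = degA m2 k) ->
  exists a a' c c' : nat, [/\ (m1 yi + a' * p1 + c' * p3 = m2 yi + a * p1 + c * p3)%N,
     (m1 zi + c' * g = m2 zi + c * g)%N & (c = 0 \/ c' = 0)%N].
Proof.
move=> H; have HL := deg_inL H.
have [sI Es] := inL_g HL.
have [_ _ PL3 _] := g_spec.
have := inL_lin (- sI) HL (inL_nat PL3).
rewrite Es (_ : sI * g%:Z + - sI * g%:Z = 0); last by ring.
move=> /inL_p1 [rI Er].
have [x1 [x1' [Ea _]]] := intsplit rI.
have [c [c' [Ec Hc]]] := intsplit sI.
exists x1, x1', c, c'; split=> //.
  move: Er; rewrite Ea Ec => Er; lia.
move: Es; rewrite Ec => Es'; lia.
Qed.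

Definition xm (v : 'I_n -> nat) : 'X_{1..n+2} :=
  [multinom (match split j with inl k => v k | inr _ => 0%N end) | j < n + 2].

Lemma xm_x v k : xm v (xi k) = v k.
Proof. by rewrite /xm mnmE (unsplitK (inl k)). Qed.
Lemma xm_y v : xm v yi = 0%N.
Proof. by rewrite /xm mnmE (unsplitK (inr _)). Qed.
Lemma xm_z v : xm v zi = 0%N.
Proof. by rewrite /xm mnmE (unsplitK (inr _)). Qed.

Definition alpha k := (p1 * a1 k %/ d k)%N.
Definition beta k := (q2 * a2 k %/ d k)%N.
Definition gamma k := ((p3 * a1 k + g * a2 k) %/ d k)%N.
Definition E1 := (U_(yi) *+ p1)%MM.
Definition E2 := (U_(zi) *+ q2)%MM.
Definition E3 := (U_(yi) *+ p3 + U_(zi) *+ g)%MM.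
Definition X1 := xm alpha.
Definition X2 := xm beta.
Definition X3 := xm gamma.

Lemma U_x j k : (U_(j) : 'X_{1..n+2})%MM (xi k) = (j == xi k).
Proof. by rewrite mnm1E. Qed.

Ltac coord := rewrite ?(mnmDE, mnmBE, mulmnE, mnm1E, xm_x, xm_y, xm_z) ?eqxx ?yz ?zy ?yx ?zx ?xy ?xz /=.

Lemma degE1 k : degA E1 k = degA X1 k.
Proof.
rewrite /degA /E1 /X1; coord.
have [_ /forallP /(_ k) H _] := p1_spec; rewrite mul0n addn0 in H.
rewrite /alpha [(d k * (_ %/ _))%N]mulnC divnK //; lia.
Qed.

Lemma degE2 k : degA E2 k = degA X2 k.
Proof.
rewrite /degA /E2 /X2; coord.
have [_ /forallP /(_ k) H _] := q2_spec; rewrite mul0n add0n in H.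
rewrite /beta [(d k * (_ %/ _))%N]mulnC divnK //; lia.
Qed.

Lemma degE3 k : degA E3 k = degA X3 k.
Proof.
rewrite /degA /E3 /X3; coord.
have [_ _ /forallP /(_ k) H _] := g_spec.
rewrite /gamma [(d k * (_ %/ _))%N]mulnC divnK //; lia.
Qed.

Lemma degA_sub L G H : (G <= L)%MM -> (forall k, degA H k = degA G k) ->
  forall k, degA ((L - G) + H)%MM k = degA L k.
Proof.
by move=> GL HG k; rewrite degAD HG -degAD submK.
Qed.

Section Core.
Variables (K : fieldType) (J : {mpoly K[n + 2]} -> Prop).
Hypothesis HJ : ideal_pred J.
Hypothesis HE1 : mrel J E1 X1.
Hypothesis HE2 : mrel J E2 X2.
Hypothesis HE3 : mrel J E3 X3.

Lemma core_pos m1 m2 : (forall k, degA m1 k = degA m2 k) -> (0 < m1 yi)%N ->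
  exists N0, mrel J (m1 *+ N0.+1)%MM (m1 *+ N0 + m2)%MM.
Proof.
move=> Hd Hp.
have [x [x' [c [c' [Ey Ez Hc]]]]] := Gprime Hd.
set N0 := (x * p1 + c * p3 + x' * p1 + c' * p3)%N; exists N0.
set L := (m1 *+ N0.+1)%MM; set R := (m1 *+ N0 + m2)%MM.
set G := (E1 *+ x + E3 *+ c)%MM; set H := (X1 *+ x + X3 *+ c)%MM.
set G' := (E1 *+ x' + E3 *+ c')%MM; set H' := (X1 *+ x' + X3 *+ c')%MM.
have rG : mrel J G H by apply: mrel_add => //; apply: mrel_muln.
have rG' : mrel J G' H' by apply: mrel_add => //; apply: mrel_muln.
have dG : forall k, degA H k = degA G k.
  by move=> k; rewrite /H /G !degAD (degAMn X1) (degAMn X3) (degAMn E1) (degAMn E3) degE1 degE3.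
have dG' : forall k, degA H' k = degA G' k.
  by move=> k; rewrite /H' /G' !degAD (degAMn X1) (degAMn X3) (degAMn E1) (degAMn E3) degE1 degE3.
have hN1 : (N0 <= m1 yi * N0)%N by rewrite leq_pmull.
have hN2 : (m1 zi <= m1 zi * N0.+1)%N by rewrite leq_pmulr.
have GL : (G <= L)%MM.
  apply/mnm_lepP => j; case: (ordP j) => [[k ->]|[->|->]];
    rewrite /G /L /E1 /E3; coord; rewrite ?mulnS; lia.
have GR : (G' <= R)%MM.
  apply/mnm_lepP => j; case: (ordP j) => [[k ->]|[->|->]];
    rewrite /G' /R /E1 /E3; coord; rewrite ?mulnS; lia.
have r1 : mrel J L ((L - G) + H)%MM.
  by have := mrel_shift HJ (L - G)%MM rG; rewrite submK.
have r2 : mrel J R ((R - G') + H')%MM.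
  by have := mrel_shift HJ (R - G')%MM rG'; rewrite submK.
have E : ((L - G) + H)%MM = ((R - G') + H')%MM.
  apply: mnm_eq.
  - rewrite /L /R /G /G' /H /H' /E1 /E3 /X1 /X3; coord; rewrite ?mulnS; lia.
  - rewrite /L /R /G /G' /H /H' /E1 /E3 /X1 /X3; coord; rewrite ?mulnS; lia.
  - move=> k; rewrite (degA_sub GL dG) (degA_sub GR dG') /L /R degAD !degAMn Hd.
    by rewrite mulnS; lia.
apply: (mrel_trans HJ r1); rewrite E; exact: mrel_sym.
Qed.


Lemma shiftrel G H m : mrel J G H -> (G <= m)%MM -> mrel J m ((m - G) + H)%MM.
Proof. by move=> rG GL; have := mrel_shift HJ (m - G)%MM rG; rewrite submK. Qed.

Lemma core_zero m1 m2 : (forall k, degA m1 k = degA m2 k) -> m1 yi = 0%N -> m2 yi = 0%N ->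
  mrel J m1 m2.
Proof.
move=> Hd p0 p'0; have := deg_inL Hd; rewrite p0 p'0 subrr => /inL_q2 [t Et].
have [b [b' [Eb Hb]]] := intsplit t.
have HE2' : mrel J (E2 *+ b) (X2 *+ b) := mrel_muln HJ b HE2.
have HE2'' : mrel J (E2 *+ b') (X2 *+ b') := mrel_muln HJ b' HE2.
case: Hb => Hb; move: Et; rewrite Eb Hb => Et.
- have GL : (E2 *+ b' <= m2)%MM.
    apply/mnm_lepP => j; case: (ordP j) => [[k ->]|[->|->]]; rewrite /E2; coord; lia.
  apply: mrel_sym => //; apply: (mrel_trans HJ (shiftrel HE2'' GL)).
  have -> : (m2 - E2 *+ b' + X2 *+ b')%MM = m1; last exact: mrel_refl.
  apply: mnm_eq.
  + by rewrite /E2 /X2; coord; lia.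
  + by rewrite /E2 /X2; coord; lia.
  + move=> k; rewrite (degA_sub GL) // => k'.
    by rewrite (degAMn X2) (degAMn E2) degE2.
- have GL : (E2 *+ b <= m1)%MM.
    apply/mnm_lepP => j; case: (ordP j) => [[k ->]|[->|->]]; rewrite /E2; coord; lia.
  apply: (mrel_trans HJ (shiftrel HE2' GL)).
  have -> : (m1 - E2 *+ b + X2 *+ b)%MM = m2; last exact: mrel_refl.
  apply: mnm_eq.
  + by rewrite /E2 /X2; coord; lia.
  + by rewrite /E2 /X2; coord; lia.
  + move=> k; rewrite (degA_sub GL) // => k'.
    by rewrite (degAMn X2) (degAMn E2) degE2.
Qed.

Lemma alpha_lt k : (alpha k < (\sum_(l < n) alpha l).+1)%N.
Proof. by rewrite ltnS (bigD1 k) //= leq_addr. Qed.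

Lemma alpha_pos k : (0 < alpha k)%N -> (0 < a1 k)%N.
Proof. by rewrite /alpha; case: (posnP (a1 k)) => [->|//]; rewrite muln0 div0n. Qed.

Lemma beta_pos k : (0 < a2 k)%N -> (0 < beta k)%N.
Proof.
move=> ha2; have [q2g /forallP /(_ k) H _] := q2_spec; rewrite mul0n add0n in H.
have := divnK H; rewrite -/(beta k) => E.
rewrite lt0n; apply/negP => /eqP b0; move: E; rewrite b0 mul0n => /esym /eqP.
rewrite muln_eq0; case/orP => /eqP; lia.
Qed.

Lemma core_lift m1 m2 : (forall k, degA m1 k = degA m2 k) -> m1 yi = 0%N -> (0 < m2 yi)%N ->
  exists kk M, mrel J (m1 *+ kk.+1)%MM M /\ (0 < M yi)%N /\
     (forall k, degA M k = (degA m1 k * kk.+1)%N).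
Proof.
move=> Hd p0 p'p.
set T := (\sum_(l < n) alpha l).+1.
set jj := if (0 < m1 zi)%N then T else 0%N.
set kk := (T * q2 + T)%N.
exists kk.-1; rewrite prednK; last by rewrite /kk addn_gt0 orbT.
have HG2 : mrel J (E2 *+ jj) (X2 *+ jj) := mrel_muln HJ jj HE2.
have G2L : (E2 *+ jj <= m1 *+ kk)%MM.
  apply/mnm_lepP => j; case: (ordP j) => [[k ->]|[->|->]]; rewrite /E2; coord => //.
  rewrite /jj; case: posnP => [->|qp] //=; first by rewrite muln0.
  by rewrite /kk; nia.
set M' := (m1 *+ kk - E2 *+ jj + X2 *+ jj)%MM.
have r1 : mrel J (m1 *+ kk) M' := shiftrel HG2 G2L.
have X1L : (X1 <= M')%MM.
  apply/mnm_lepP => j; case: (ordP j) => [[l ->]|[->|->]]; rewrite /M' /X1 /E2 /X2; coord => //.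
  rewrite subn0; case: (posnP (alpha l)) => [->|ap] //.
  have a1p := alpha_pos ap.
  have hl := alpha_lt l; rewrite -/T in hl.
  have := Hd l; rewrite /degA p0 => E.
  case: (posnP (m1 (xi l))) => [u0|up].
    have q0 : (0 < m1 zi)%N by move: E; rewrite u0; nia.
    have a2p : (0 < a2 l)%N by move: E; rewrite u0; nia.
    have bp := beta_pos a2p.
    by rewrite /jj q0; nia.
  by rewrite /kk; nia.
have rX : mrel J X1 E1 := mrel_sym HJ HE1.
set M := (M' - X1 + E1)%MM.
have r2 : mrel J M' M := shiftrel rX X1L.
exists M; split; first exact: (mrel_trans HJ r1 r2).
split.
  by rewrite /M /M' /E1 /X1 /E2 /X2; coord; rewrite p0; have := p1_gt0; lia.
move=> k; rewrite /M (degA_sub X1L) => [|k']; last exact: degE1.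
by rewrite /M' (degA_sub G2L) => [|k']; [rewrite degAMn | rewrite (degAMn X2) (degAMn E2) degE2].
Qed.

Lemma core_all m1 m2 : (forall k, degA m1 k = degA m2 k) ->
  exists N0, mrel J (m1 *+ N0.+1)%MM (m1 *+ N0 + m2)%MM.
Proof.
move=> Hd; case: (posnP (m1 yi)) => [p0|pp]; last exact: core_pos.
case: (posnP (m2 yi)) => [p'0|p'p].
  by exists 0%N; rewrite mulm1n mulm0n add0m; apply: core_zero.
have [kk [M [rM [My dM]]]] := core_lift Hd p0 p'p.
set M2 := (m1 *+ kk + m2)%MM.
have dM2 : forall k, degA M k = degA M2 k.
  by move=> k; rewrite dM /M2 degAD degAMn -Hd mulnS; lia.
have [N1 rN] := core_pos dM2 My.
exists (kk.+1 * N1 + kk)%N.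
have -> : (m1 *+ (kk.+1 * N1 + kk).+1)%MM = ((m1 *+ kk.+1) *+ N1.+1)%MM.
  by apply/mnmP => j; rewrite !mulmnE; nia.
have -> : (m1 *+ (kk.+1 * N1 + kk) + m2)%MM = ((m1 *+ kk.+1) *+ N1 + M2)%MM.
  by apply/mnmP => j; rewrite /M2 !mnmDE !mulmnE; nia.
apply: (mrel_trans HJ (mrel_muln HJ _ rM)).
apply: (mrel_trans HJ rN).
apply: mrel_add => //; last exact: mrel_refl.
by apply: mrel_sym => //; apply: mrel_muln.
Qed.

Lemma binom_rad m1 m2 : (forall k, degA m1 k = degA m2 k) ->
  exists k, J (('X_[m1] - 'X_[m2]) ^+ k).
Proof.
move=> Hd; apply: mrel_pow => //; apply: core_all => // k; exact/esym.
Qed.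
End Core.

Definition colnat (j : 'I_(n + 2)) (k : 'I_n) : nat :=
  match split j with inl j' => if j' == k then d k else 0%N | inr i => a i k end.

Lemma corconfigE j k : corconfig d a j k = (colnat j k)%:Z.
Proof. by rewrite /corconfig /colnat; case: split => [j'|i] //; case: eqP. Qed.

Definition colm j : 'X_{1..n} := [multinom colnat j k | k < n].
Definition Bm (m : 'X_{1..n+2}) : 'X_{1..n} := (\sum_(j < n + 2) colm j *+ m j)%MM.

Lemma AimgBm m : Aimg A m = [ffun k => (Bm m k)%:Z].
Proof.
apply/ffunP => k; rewrite !ffunE /Bm mnm_sumE.
rewrite (big_morph Posz PoszD (erefl _)); apply: eq_bigr => j _.
by rewrite mulmnE /colm mnmE corconfigE PoszM mulrC.
Qed.

Section Rad.
Variable (K : fieldType).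
Definition hcol (j : 'I_(n + 2)) : {mpoly K[n]} := 'X_[colm j].
Definition phi (f : {mpoly K[n + 2]}) : {mpoly K[n]} := mmap (@mpolyC n K) hcol f.

Lemma phi_coef f b : (phi f)@_b = \sum_(m <- msupp f) f@_m * (Bm m == b)%:R.
Proof.
rewrite /phi /mmap raddf_sum; apply: eq_bigr => m _.
change (((f@_m)%:MP * mmap1 hcol m)@_b = f@_m * (Bm m == b)%:R).
by rewrite mcoeffCM /mmap1 /hcol mprodXnE mcoeffX.
Qed.

Lemma toric_rad (f : {mpoly K[n + 2]}) k : toric_ideal A (f ^+ k) -> toric_ideal A f.
Proof.
move=> /toricE H.
have P0 : phi (f ^+ k) = 0.
  apply/mpolyP => b; rewrite mcoeff0 phi_coef -[RHS](H [ffun k => (b k)%:Z]) /fib.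
  apply: eq_bigr => m _; congr (_ * _%:R); congr (nat_of_bool _).
  rewrite AimgBm; apply/idP/idP => /eqP E; apply/eqP.
    by apply/ffunP => k'; rewrite !ffunE E.
  by apply/mnmP => k'; move/ffunP: E => /(_ k'); rewrite !ffunE => -[].
have : phi f ^+ k = 0 by rewrite -rmorphXn.
move/eqP; rewrite expf_eq0 => /andP [_ /eqP Pf].
apply/toricE => b.
case: (boolP [forall k', 0 <= b k']) => [/forallP Hb|/forallPn [k' Hk']].
  set b0 : 'X_{1..n} := [multinom `|b k'|%N | k' < n].
  have E0 : (phi f)@_b0 = 0 by rewrite Pf mcoeff0.
  rewrite -[RHS]E0 phi_coef /fib; apply: eq_bigr => m _; congr (_ * _%:R); congr (nat_of_bool _).
  rewrite AimgBm; apply/idP/idP => /eqP E; apply/eqP.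
    by apply/mnmP => k'; rewrite /b0 mnmE -E ffunE.
  by apply/ffunP => k'; rewrite ffunE E /b0 mnmE gez0_abs.
rewrite /fib big1 // => m _; rewrite AimgBm.
case: eqP => [E|]; last by rewrite mulr0.
by move: Hk'; rewrite -E ffunE.
Qed.
End Rad.

Definition extra (i : 'I_3) (j : 'I_(n + 2)) : int :=
  match val i with
  | 0 => (j == zi)%:R
  | 1 => (j == yi)%:R
  | _ => g%:Z * (j == yi)%:R - p3%:Z * (j == zi)%:R
  end.

Definition As (i : 'I_3) : config (n + 2) (n + 1) :=
  fun j k' => match split k' with inl k => corconfig d a j k | inr _ => extra i j end.

Lemma sum_ind m j0 : \sum_(j < n + 2) (m j)%:Z * (j == j0)%:R = (m j0)%:Z.
Proof.
rewrite (bigD1 j0) //= eqxx mulr1 big1 ?addr0 // => j /negbTE ->; by rewrite mulr0.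
Qed.

Definition ext (i : 'I_3) m : int :=
  match val i with
  | 0 => (m zi)%:Z
  | 1 => (m yi)%:Z
  | _ => g%:Z * (m yi)%:Z - p3%:Z * (m zi)%:Z
  end.

Lemma AimgAs_l i m k : Aimg (As i) m (lshift 1 k) = Aimg A m k.
Proof. by rewrite !ffunE /As (unsplitK (inl k)). Qed.

Lemma AimgAs_r i m : Aimg (As i) m (rshift n ord0) = ext i m.
Proof.
rewrite !ffunE /As (unsplitK (inr ord0)) /extra /ext.
case: i => [[|[|i]] Hi] /=; rewrite ?sum_ind //.
rewrite (eq_bigr (fun j => g%:Z * ((m j)%:Z * (j == yi)%:R) - p3%:Z * ((m j)%:Z * (j == zi)%:R))).
  by rewrite sumrB -!mulr_sumr !sum_ind.
by move=> j _; ring.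
Qed.

Lemma AimgAsP i m m' : Aimg (As i) m = Aimg (As i) m' <->
  Aimg A m = Aimg A m' /\ ext i m = ext i m'.
Proof.
split=> [E|[E1' E2']].
  split; last by rewrite -(AimgAs_r i m) -(AimgAs_r i m') E.
  by apply/ffunP => k; rewrite -(AimgAs_l i m) -(AimgAs_l i m') E.
apply/ffunP => k'; case: (split_ordP k') => [k ->|j ->].
  by rewrite !AimgAs_l E1'.
have -> : j = ord0 by case: j => [[|//] Hj]; apply: val_inj.
by rewrite !AimgAs_r E2'.
Qed.

Lemma As_sub (K : fieldType) i (f : {mpoly K[n + 2]}) : toric_ideal (As i) f -> toric_ideal A f.
Proof.
move=> /toric_decomp [rep [Hrep ->]]; apply: toric_sum => m.
apply: toricZ; apply: toric_binom.
by have /AimgAsP [] := Hrep m.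
Qed.

Lemma pointedA : pointed_config A.
Proof.
move=> u Hu.
set mu : 'X_{1..n+2} := [multinom u j | j < n + 2].
have D : forall k, degA mu k = 0%N.
  move=> k; have := Hu k.
  have -> : \sum_(j < n + 2) (u j)%:Z * A j k = Aimg A mu k.
    by rewrite ffunE; apply: eq_bigr => j _; rewrite /mu mnmE.
  by rewrite AimgE ffunE => -[].
have uy : u yi = 0%N.
  have [k Hk] := ha ord0; have := D k; rewrite /degA /mu !mnmE /a1; lia.
have uz : u zi = 0%N.
  have [k Hk] := ha ord_max; have := D k; rewrite /degA /mu !mnmE /a2; lia.
move=> j; case: (ordP j) => [[k ->]|[->|->]] //.
have := D k; rewrite /degA /mu !mnmE => E.
have := hd k; nia.
Qed.

Lemma pointedAs i : pointed_config (As i).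
Proof.
move=> u Hu; apply: pointedA => k; rewrite -[RHS](Hu (lshift 1 k)).
by apply: eq_bigr => j _; rewrite /As (unsplitK (inl k)).
Qed.

Definition i1 : 'I_3 := @Ordinal 3 1 isT.
Definition i2 : 'I_3 := @Ordinal 3 2 isT.

Lemma genA1 : Aimg A E1 = Aimg A X1. Proof. by apply/AimgP => k; apply: degE1. Qed.
Lemma genA2 : Aimg A E2 = Aimg A X2. Proof. by apply/AimgP => k; apply: degE2. Qed.
Lemma genA3 : Aimg A E3 = Aimg A X3. Proof. by apply/AimgP => k; apply: degE3. Qed.

Lemma gen1 : Aimg (As ord0) E1 = Aimg (As ord0) X1.
Proof. apply/AimgAsP; split; first exact: genA1. by rewrite /ext /= /E1 /X1; coord. Qed.
Lemma gen2 : Aimg (As i1) E2 = Aimg (As i1) X2.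
Proof. apply/AimgAsP; split; first exact: genA2. by rewrite /ext /= /E2 /X2; coord. Qed.
Lemma gen3 : Aimg (As i2) E3 = Aimg (As i2) X3.
Proof.
apply/AimgAsP; split; first exact: genA3.
rewrite /ext /= /E3 /X3; coord; lia.
Qed.

Lemma ne0 : Aimg (As ord0) E2 != Aimg (As ord0) X2.
Proof.
apply/eqP => /AimgAsP [_]; rewrite /ext /= /E2 /X2; coord.
have := q2_gt0; lia.
Qed.
Lemma ne1 : Aimg (As i1) E1 != Aimg (As i1) X1.
Proof.
apply/eqP => /AimgAsP [_]; rewrite /ext /= /E1 /X1; coord.
have := p1_gt0; lia.
Qed.
Lemma ne2 : Aimg (As i2) E1 != Aimg (As i2) X1.
Proof.
apply/eqP => /AimgAsP [_]; rewrite /ext /= /E1 /X1; coord.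
have := p1_gt0; have := g_gt0; nia.
Qed.

Section Final.
Variable K : fieldType.

Lemma upper : rad_split_with K A 3.
Proof.
exists (fun _ => (n + 1)%N), As; split; first exact: pointedAs.
split.
  move=> f.
  set I := fun i : 'I_3 => @toric_ideal K (n + 2) (n + 1) (As i).
  have HI : forall i, ideal_pred (I i) by move=> i; apply: tor_ideal.
  have HJ := ideal_sum_ideal HI.
  have HE : forall i (m m' : 'X_{1..n+2}), Aimg (As i) m = Aimg (As i) m' ->
      mrel (ideal_sum I) m m'.
    by move=> i m m' E; apply: (ideal_sum_in (i := i)) => //; apply: toric_binom.
  split.
    move=> /toric_decomp [rep [Hrep Ef]].
    rewrite /radical Ef; apply: rad_sum => // m _.
    have [k Hk] : exists k, ideal_sum I (('X_[m] - 'X_[rep m]) ^+ k).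
      apply: (binom_rad HJ (HE _ _ _ gen1) (HE _ _ _ gen2) (HE _ _ _ gen3)).
      by have /AimgP H := Hrep m; move=> k; rewrite H.
    by exists k; apply: radZ.
  move=> [k [gg [Hg Ek]]]; apply: (@toric_rad K f k).
  by rewrite Ek; apply: toric_sum => i; apply: (As_sub (Hg i)).
move=> i H.
have key : forall m m', Aimg A m = Aimg A m' -> Aimg (As i) m != Aimg (As i) m' -> False.
  move=> m m' EA ne; apply: (@binom_not_tor K _ _ _ _ _ 1 ne); rewrite expr1.
  by apply/H; apply: toric_binom.
have : i = ord0 \/ i = i1 \/ i = i2.
  by case: i {H key} => [[|[|[|//]]] Hi]; [left|right;left|right;right]; apply: val_inj.
case=> [Ei|[Ei|Ei]]; subst i.
- exact: (key _ _ genA2 ne0).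
- exact: (key _ _ genA1 ne1).
- exact: (key _ _ genA1 ne2).
Qed.

Lemma lower r : rad_split_with K A r -> (2 <= r)%N.
Proof.
case: r => [|[|r]] // [ns [As' [Hp [H Hne]]]]; exfalso.
- have : toric_ideal A ('X_[E1] - 'X_[X1] : {mpoly K[n + 2]}) by apply: toric_binom; apply: genA1.
  move/H => [k [gg [_]]]; rewrite big_ord0 => /eqP; rewrite expf_eq0 => /andP [_].
  rewrite subr_eq0 => /eqP EX.
  have := congr1 (mcoeff E1) EX; rewrite !mcoeffX eqxx.
  case: eqP => [EE|_]; last by move/eqP; rewrite oner_eq0.
  have := congr1 (fun m : 'X_{1..n+2} => m yi) EE; rewrite /= /E1 /X1; coord.
  have := p1_gt0; lia.
- apply: (Hne ord0) => f.
  have HI : forall i, ideal_pred (@toric_ideal K (n + 2) (ns i) (As' i)) by move=> i; apply: tor_ideal.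
  split.
    move=> Hf; apply/H; exists 1%N; rewrite expr1; exact: (ideal_sum_in (i := ord0)).
  move=> /toric_decomp [rep [Hrep ->]]; apply: toric_sum => m; apply: toricZ.
  have : toric_ideal A ('X_[m] - 'X_[rep m] : {mpoly K[n + 2]}) by apply: toric_binom.
  move/H => [k [gg [Hg Ek]]]; move: Ek; rewrite big_ord1 => Ek.
  have Hk := Hg ord0; rewrite -Ek in Hk.
  case: (eqVneq (Aimg (As' ord0) m) (Aimg (As' ord0) (rep m))) => [E|ne].
    exact: toric_binom.
  by case: (binom_not_tor ne Hk).
Qed.

End Final.
End Cor.

Theorem corollary4p4 (K : fieldType) (n : nat) (d : 'I_n -> nat)
  (a : 'I_2 -> 'I_n -> nat)
  (hd : forall j, (0 < d j)%N)
  (ha : forall i, exists j, a i j != 0%N) :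
  (exists r : nat, (r <= 3)%N /\ rad_split_with K (corconfig d a) r) /\
  (forall r : nat, rad_split_with K (corconfig d a) r -> (2 <= r)%N).
Proof.
split; first by exists 3%N; split => //; apply: upper.
by move=> r; apply: lower.
Qed.
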